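(* Let $(X,d_X,\mu_X)$ be a compact metric measure space and let $\phi_i$ be an $L^2$-normalized eigenfunction of the distance kernel operator $D^X$ with eigenvalue $\lambda_i$. Then the function $\lambda_i\phi_i$ ($=D^X\phi_i$) is $\sqrt{\operatorname{Vol}(X)}$-Lipschitz. Hence, if $\lambda_i\neq0$, $\phi_i$ is $\big(\sqrt{\operatorname{Vol}(X)}/|\lambda_i|\big)$-Lipschitz.
   Context: A metric measure space carries a Radon Borel measure; $\operatorname{Vol}(X)=\mu_X(X)$. The distance kernel operator is $(D^Xf)(x)=\int_X f(y)d_X(x,y)\,d\mu_X(y)$ on $L^2(X,\mu_X)$. *)

(* Defs.v *)
From HB Require Import structures.
From mathcomp Require Import all_boot all_order all_algebra.
From mathcomp Require Import all_classical all_reals all_analysis.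
Set Implicit Arguments. Unset Strict Implicit. Unset Printing Implicit Defensive.
Import Order.TTheory GRing.Theory Num.Theory.
Local Open Scope classical_set_scope.
Local Open Scope ring_scope.

Section MetricMeasure.
Context {R : realType} {d : measure_display} {T : measurableType d}.

Definition is_metric (dX : T -> T -> R) : Prop :=
  [/\ forall x y, 0 <= dX x y,
      forall x y, dX x y = 0 <-> x = y,
      forall x y, dX x y = dX y x &
      forall x y z, dX x z <= dX x y + dX y z].

Definition dball (dX : T -> T -> R) (x : T) (r : R) : set T :=
  [set y | dX x y < r].

Definition dopen (dX : T -> T -> R) (A : set T) : Prop :=
  forall x, A x -> exists2 r : R, 0 < r & dball dX x r `<=` A.

Definition dcompact (dX : T -> T -> R) (K : set T) : Prop :=
  forall (I : Type) (U : I -> set T),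
    (forall i, dopen dX (U i)) -> K `<=` \bigcup_i U i ->
    exists2 F : set I, finite_set F & K `<=` \bigcup_(i in F) U i.

Definition borel_for (dX : T -> T -> R) : Prop :=
  (@measurable d T) = <<s dopen dX >>.

Definition radon (dX : T -> T -> R) (mu : {measure set T -> \bar R}) : Prop :=
  (forall x, exists2 r : R, 0 < r & (mu (dball dX x r) < +oo)%E) /\
  (forall A, measurable A ->
     mu A = ereal_sup [set mu K | K in [set K | dcompact dX K /\ K `<=` A]]).

Definition compact_mm_space (dX : T -> T -> R) (mu : {measure set T -> \bar R})
  : Prop :=
  [/\ is_metric dX, borel_for dX, dcompact dX setT & radon dX mu].

Definition Vol (mu : {measure set T -> \bar R}) : \bar R := mu setT.

Definition distop (dX : T -> T -> R) (mu : {measure set T -> \bar R})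
  (f : T -> R) (x : T) : R :=
  Rintegral mu setT (fun y => f y * dX x y).

Definition L2_normalized (mu : {measure set T -> \bar R}) (f : T -> R) : Prop :=
  measurable_fun setT f /\ (\int[mu]_x ((f x) ^+ 2)%:E = 1)%E.

(* f is an eigenfunction of D^X with eigenvalue lam (equality in L^2, i.e. a.e.) *)
Definition is_eigenfunction (dX : T -> T -> R) (mu : {measure set T -> \bar R})
  (lam : R) (f : T -> R) : Prop :=
  {ae mu, forall x, distop dX mu f x = lam * f x}.

Definition lipschitz_with (dX : T -> T -> R) (L : R) (f : T -> R) : Prop :=
  forall x y, `|f x - f y| <= L * dX x y.

End MetricMeasure.

(* Main.v *)
Require Import Defs.
From mathcomp Require Import all_boot all_order all_algebra.
From mathcomp Require Import all_classical all_reals all_analysis.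
From mathcomp Require Import ring lra measurable_realfun.
From mathcomp Require Import ring lra measurable_realfun.
Import Order.TTheory GRing.Theory Num.Theory.
Local Open Scope classical_set_scope.
Local Open Scope ring_scope.

Section Aux.
Context {R : realType} {d : measure_display} {T : measurableType d}.
Variable (dX : T -> T -> R).
Hypothesis met : is_metric dX.

Lemma dball_open x r : dopen dX (dball dX x r).
Proof.
case: met => d0 _ dsym dtri.
move=> y; rewrite /dball /= => xy.
exists (r - dX x y); first by rewrite subr_gt0.
move=> z; rewrite /dball /= => yz.
apply: (le_lt_trans (dtri x y z)); by rewrite -ltrBrDl.
Qed.

Hypothesis bor : borel_for dX.

Lemma dball_meas x r : measurable (dball dX x r).
Proof. rewrite bor; apply: sub_sigma_algebra; exact: dball_open. Qed.

Lemma dX_meas x : measurable_fun setT (dX x).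
Proof.
apply: (measurability _ (measurable_realfun.RGenInftyO.measurableE R)).
move=> _ [_ [r ->] <-]; rewrite setTI.
have -> : dX x @^-1` `]-oo, r[%classic = dball dX x r.
  by apply/seteqP; split => z; rewrite /= in_itv /=.
exact: dball_meas.
Qed.


Lemma le_sum_mem (s : seq T) (f : T -> R) c : (forall i, 0 <= f i) ->
  c \in s -> f c <= \sum_(i <- s) f i.
Proof.
move=> f0; elim: s => [//|a s IH]; rewrite in_cons big_cons => /orP[/eqP->|cs].
  by rewrite lerDl sumr_ge0.
by rewrite (le_trans (IH cs)) // lerDr.
Qed.

Lemma cover_facts (mu : {measure set T -> \bar R}) :
  dcompact dX setT -> radon dX mu ->
  exists B : R, (forall x z, dX x z <= B) /\ (mu setT < +oo)%E.
Proof.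
have [d0 deq dsym dtri] := met.
move=> cpt [rad _].
have rad' : forall x, exists r : R, 0 < r /\ (mu (dball dX x r) < +oo)%E.
  by move=> x; case: (rad x) => r r0 h; exists r.
have [rf Hrf] := choice rad'.
pose U := fun x => dball dX x (Num.min (rf x) 1).
have cov0 : setT `<=` \bigcup_x U x.
  move=> x _; exists x => //; rewrite /U /dball /=.
  have -> : dX x x = 0 by apply/deq.
  by rewrite lt_min ltr01 andbT; case: (Hrf x).
have [F Ffin cov] := cpt T U (fun x => dball_open _ _) cov0.
have fin : (mu setT < +oo)%E.
  apply: (le_lt_trans (content_sub_fsum mu Ffin _ _ cov)) => //.
    by move=> i _; exact: dball_meas.
  rewrite fsbig_finite //; apply: lte_sum_pinfty => i _.
  case: (Hrf i) => _ h; apply: le_lt_trans h; apply: le_measure; rewrite ?inE;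
    try exact: dball_meas.
  move=> z; rewrite /dball /= => h1; apply: (lt_le_trans h1); by rewrite ge_min lexx.
pose x0 : T := point.
pose S := \sum_(c <- finmap.enum_fset (fset_set F)) dX x0 c.
have inF z : exists2 c, c \in finmap.enum_fset (fset_set F) & dX c z <= 1.
  case: (cov z I) => c Fc; rewrite /U /dball /= lt_min => /andP[_ h].
  by exists c; [rewrite in_fset_set // inE | exact: ltW].
have bS c : c \in finmap.enum_fset (fset_set F) -> dX x0 c <= S by apply: le_sum_mem.
exists (1 + (S + (S + 1))); split => // x z.
have [c1 F1 h1] := inF x; have [c2 F2 h2] := inF z.
apply: (le_trans (dtri x c1 z)); apply: lerD; first by rewrite dsym.
apply: (le_trans (dtri c1 x0 z)); apply: lerD; first by rewrite dsym; apply: bS.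
by apply: (le_trans (dtri x0 c2 z)); apply: lerD => //; apply: bS.
Qed.

End Aux.
Theorem lemma3p2 (R : realType) (d : measure_display) (T : measurableType d)
  (dX : T -> T -> R) (mu : {measure set T -> \bar R})
  (phi : T -> R) (lam : R) :
  compact_mm_space dX mu ->
  L2_normalized mu phi ->
  is_eigenfunction dX mu lam phi ->
  lipschitz_with dX (Num.sqrt (fine (Vol mu))) (distop dX mu phi) /\
  (lam != 0 ->
   exists psi : T -> R,
     {ae mu, forall x, psi x = phi x} /\
     lipschitz_with dX (Num.sqrt (fine (Vol mu)) / `|lam|) psi).
Proof.
move=> [met bor cpt rad] [mphi phi2] eig.
have [d0 deq dsym dtri] := met.
have [B [dB fin]] := @cover_facts _ _ _ dX met bor mu cpt rad.
set V := fine (Vol mu).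
have VE : mu setT = V%:E by rewrite /V /Vol fineK // ge0_fin_numE.
have mphi2 : measurable_fun setT (fun x => phi x ^+ 2) by exact: measurable_realfun.measurable_funX.
have Vpos : 0 < V.
  rewrite lt_def fine_ge0 ?measure_ge0 // andbT; apply/eqP => V0.
  move: phi2; rewrite null_set_integral //; last by rewrite VE V0.
    by move=> [] /eqP; rewrite eq_sym oner_eq0.
  exact/measurable_EFinP.
have iphi2 : mu.-integrable setT (EFin \o (fun x => phi x ^+ 2)).
  apply/integrableP; split; first exact/measurable_EFinP.
  under eq_integral do rewrite /= ger0_norm ?sqr_ge0 //.
  by rewrite phi2 ltry.
have icst k : mu.-integrable setT (EFin \o cst k).
  apply/integrableP; split; first exact/measurable_EFinP/measurable_cst.
  by rewrite /= integral_cst // VE -EFinM ltry.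
have iabs : mu.-integrable setT (EFin \o (fun x => `|phi x|)).
  apply: (@le_integrable _ _ _ mu setT measurableT _ (EFin \o (fun x => phi x ^+ 2 + 1))).
  - exact/measurable_EFinP/measurableT_comp.
  - move=> x _; have h0 : 0 <= phi x ^+ 2 + 1 by rewrite addr_ge0 ?sqr_ge0.
    rewrite /= lee_fin normr_id (ger0_norm h0).
    rewrite -real_normK ?num_real //; set t := `|phi x|.
    have t0 : 0 <= t by exact: normr_ge0.
    rewrite -subr_ge0 (_ : _ - t = (t - 1%:R/2) ^+ 2 + 3%:R/4); first by rewrite addr_ge0 ?sqr_ge0 // divr_ge0.
    by field.
  rewrite (_ : EFin \o _ = ((EFin \o (fun x => (phi x ^+ 2)%R)) \+ (EFin \o cst 1%R))%E).
    exact: integrableD.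
  by apply: funext => z.
have iphi : mu.-integrable setT (EFin \o phi).
  apply: (le_integrable measurableT _ _ iabs) => //; first exact/measurable_EFinP.
  by move=> x _; rewrite /= normr_id.
have imul x : mu.-integrable setT (EFin \o (fun z => phi z * dX x z)).
  rewrite (_ : EFin \o _ = ((EFin \o phi) \* (EFin \o dX x))%E); last first.
    by apply: funext => z /=; rewrite EFinM.
  apply: integrableMl => //; first exact: dX_meas.
  exists B; split; first exact: num_real.
  move=> M BM z _ /=; rewrite ger0_norm //; apply: le_trans (dB _ _) _.
  exact: ltW.
pose s := Num.sqrt V.
have s0 : 0 < s by rewrite sqrtr_gt0.
have key : \int[mu]_x `|phi x| <= s.
  have key1 t : t <= s / 2 * t ^+ 2 + (2 * s)^-1.
    rewrite -subr_ge0 (_ : _ - t = (2 * s)^-1 * (s * t - 1) ^+ 2).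
      by rewrite mulr_ge0 ?sqr_ge0 // invr_ge0 mulr_ge0 // ltW.
    by field; rewrite gt_eqF.
  have i1 : mu.-integrable setT (EFin \o (fun x => s / 2 * phi x ^+ 2)).
    rewrite (_ : EFin \o _ = (fun x => (s / 2)%R%:E * (EFin \o (fun x => (phi x ^+ 2)%R)) x)%E).
      exact: integrableZl.
    by apply: funext => z /=; rewrite EFinM.
  have i2 : mu.-integrable setT
      (EFin \o (fun x => s / 2 * phi x ^+ 2 + (2 * s)^-1)).
    rewrite (_ : EFin \o _ = ((EFin \o (fun x => (s / 2 * phi x ^+ 2)%R))
       \+ (EFin \o cst ((2 * s)^-1)%R))%E).
      exact: integrableD.
    by apply: funext => z /=; rewrite EFinD.
  apply: (le_trans (le_Rintegral _ iabs i2 _)) => //.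
    move=> x _; rewrite -[phi x ^+ 2]real_normK ?num_real //; exact: key1.
  rewrite (RintegralD _ i1 (icst _)) //.
  rewrite RintegralZl // Rintegral_cst //.
  have -> : \int[mu]_x (phi x ^+ 2) = 1 by rewrite /Rintegral phi2.
  rewrite -/(Vol mu) -/V.
  have -> : V = s ^+ 2 by rewrite sqr_sqrtr // ltW.
  have -> : s / 2 * 1 + (2 * s)^-1 * s ^+ 2 = s by field; rewrite gt_eqF.
  exact: lexx.
have part1 : lipschitz_with dX s (distop dX mu phi).
  move=> x y; rewrite /distop -RintegralB //.
  have iD : mu.-integrable setT (EFin \o (fun z => phi z * dX x z - phi z * dX y z)).
    rewrite (_ : EFin \o _ = ((EFin \o (fun z => (phi z * dX x z)%R)) \- (EFin \o (fun z => (phi z * dX y z)%R)))%E).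
      exact: integrableB.
    by apply: funext => z /=; rewrite EFinB.
  apply: (le_trans (le_normr_Rintegral _ iD)) => //.
  have iZ : mu.-integrable setT (EFin \o (fun z => dX x y * `|phi z|)).
    rewrite (_ : EFin \o _ = (fun z => (dX x y)%:E * (EFin \o (fun z => (`|phi z|)%R)) z)%E).
      exact: integrableZl.
    by apply: funext => z /=; rewrite EFinM.
  apply: (le_trans (le_Rintegral _ (integrable_norm iD) iZ _)) => //.
    move=> z _ /=; rewrite -mulrBr normrM mulrC ler_wpM2r //.
    have h1 := dtri x y z; have h2 := dtri y x z; rewrite (dsym y x) in h2.
    rewrite ler_norml; apply/andP; split; last by rewrite lerBlDr.
    rewrite -subr_ge0 opprK (_ : _ + _ = dX x y + dX x z - dX y z) ?subr_ge0 //; ring.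
  rewrite RintegralZl // mulrC. apply: ler_wpM2r; [exact: d0 | exact: key].
split => // lam0.
exists (fun x => distop dX mu phi x / lam); split.
  apply: filterS eig => x h; by rewrite h mulrAC divff // mul1r.
move=> x y; rewrite -mulrBl normrM normfV mulrAC.
by rewrite ler_wpM2r ?invr_ge0 //; exact: part1.
Qed.
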